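(* Let $A\in\mathbb{R}_+^{n\times n}$ be a circulant matrix. Then $\mathrm{Attr}(A)=\{x\in\mathbb{R}_+^n:\ \lambda(A)\,A^{n^2}\otimes x=A^{n^2+1}\otimes x\}$.
   Context: Max algebra on $\mathbb{R}_+$: $\oplus=\max$, ordinary product, $(A\otimes x)_i=\max_jA_{i,j}x_j$, $A^t$ max-algebraic power. $\lambda(A)$ is the greatest max-algebraic eigenvalue (maximum cycle geometric mean). $V(A,\lambda)=\{x: A\otimes x=\lambda x\}$ and $\mathrm{Attr}(A)=\{x\in\mathbb{R}_+^n:\ A^t\otimes x\in V(A,\lambda(A))\text{ for some }t\ge0\}$. $A$ is circulant if $A_{i,j}=a_t$ with $t\equiv j-i\pmod n$, $t\in\{0,\dots,n-1\}$, for some $a_0,\dots,a_{n-1}\ge0$. *)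

(* Defs.v *)
From Stdlib Require Import Reals List ListDec Arith.
Import ListNotations.
Open Scope R_scope.

(* n x n matrices and n-vectors are represented as functions on indices;
   only indices 0 .. n-1 are meaningful. *)
Definition mat := nat -> nat -> R.
Definition vec := nat -> R.

Definition nonneg_mat (n : nat) (A : mat) : Prop :=
  forall i j, (i < n)%nat -> (j < n)%nat -> 0 <= A i j.
Definition nonneg_vec (n : nat) (x : vec) : Prop :=
  forall i, (i < n)%nat -> 0 <= x i.

Definition circulant (n : nat) (A : mat) : Prop :=
  exists a : nat -> R, (forall t, (t < n)%nat -> 0 <= a t) /\
    forall i j, (i < n)%nat -> (j < n)%nat -> A i j = a ((j + n - i) mod n)%nat.

(* maximum of a finite family of nonnegative reals (empty max = 0) *)
Definition maxl (l : list R) : R := fold_right Rmax 0 l.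
Definition maxn_ (n : nat) (f : nat -> R) : R := maxl (map f (seq 0 n)).

Definition mvmul (n : nat) (A : mat) (x : vec) : vec :=
  fun i => maxn_ n (fun j => A i j * x j).
Definition mmul (n : nat) (A B : mat) : mat :=
  fun i j => maxn_ n (fun k => A i k * B k j).
Definition mid : mat := fun i j => if Nat.eqb i j then 1 else 0.
Fixpoint mpow (n : nat) (A : mat) (t : nat) : mat :=
  match t with
  | O => mid
  | S t' => mmul n A (mpow n A t')
  end.

Fixpoint words (n k : nat) : list (list nat) :=
  match k with
  | O => [[]]
  | S k' => flat_map (fun w => map (fun i => i :: w) (seq 0 n)) (words n k')
  end.
(* elementary cycles (i_0 -> i_1 -> ... -> i_{k-1} -> i_0), k >= 1,
   given by their vertex sequence with distinct vertices *)
Definition cycles (n k : nat) : list (list nat) :=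
  filter (fun w => if ListDec.NoDup_dec Nat.eq_dec w then true else false) (words n k).
Definition cycle_weight (A : mat) (k : nat) (w : list nat) : R :=
  fold_right Rmult 1
    (map (fun l => A (nth l w 0%nat) (nth ((l + 1) mod k) w 0%nat)) (seq 0 k)).
Definition root (k : nat) (w : R) : R :=
  if Rle_dec w 0 then 0 else Rpower w (/ INR k).
Definition lambda (n : nat) (A : mat) : R :=
  maxl (flat_map (fun k => map (fun w => root k (cycle_weight A k w)) (cycles n k))
                 (seq 1 n)).

Definition in_V (n : nat) (A : mat) (mu : R) (x : vec) : Prop :=
  forall i, (i < n)%nat -> mvmul n A x i = mu * x i.

Definition Attr (n : nat) (A : mat) (x : vec) : Prop :=
  nonneg_vec n x /\ exists t : nat, in_V n A (lambda n A) (mvmul n (mpow n A t) x).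

(* Main.v *)
Require Import Defs.
From Stdlib Require Import Reals List Arith Lia Lra Classical.
Open Scope R_scope.

Lemma maxl_ge0 l : 0 <= maxl l.
Proof. induction l; simpl; [lra|]. eapply Rle_trans; [exact IHl|apply Rmax_r]. Qed.

Lemma maxn_ge0 n f : 0 <= maxn_ n f.
Proof. apply maxl_ge0. Qed.

Lemma maxl_ub l x : In x l -> x <= maxl l.
Proof. induction l; simpl; intros H; [contradiction|]. destruct H as [->|H].
 apply Rmax_l. eapply Rle_trans; [apply IHl; auto|apply Rmax_r]. Qed.

Lemma maxn_ub n f j : (j < n)%nat -> f j <= maxn_ n f.
Proof. intros. apply maxl_ub. apply in_map. apply in_seq. lia. Qed.

Lemma maxl_lub l c : 0 <= c -> (forall x, In x l -> x <= c) -> maxl l <= c.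
Proof. induction l; simpl; intros; auto. apply Rmax_lub; auto. Qed.

Lemma maxn_lub n f c : 0 <= c -> (forall j, (j < n)%nat -> f j <= c) -> maxn_ n f <= c.
Proof. intros. apply maxl_lub; auto. intros x Hx. apply in_map_iff in Hx.
 destruct Hx as [j [<- Hj]]. apply in_seq in Hj. apply H0; lia. Qed.

Lemma maxn_ext n f g : (forall j, (j < n)%nat -> f j = g j) -> maxn_ n f = maxn_ n g.
Proof. intros. unfold maxn_. f_equal. apply map_ext_in. intros j Hj.
 apply in_seq in Hj. apply H; lia. Qed.

Lemma maxl_cases l : maxl l = 0 \/ exists x, In x l /\ maxl l = x.
Proof. induction l; simpl; auto. destruct (Rle_dec a (maxl l)).
 rewrite Rmax_right by auto. destruct IHl as [H|[x [H1 H2]]]; auto. right; exists x; auto.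
 rewrite Rmax_left by lra. right; exists a; auto. Qed.

Lemma maxn_cases n f : maxn_ n f = 0 \/ exists j, (j < n)%nat /\ maxn_ n f = f j.
Proof. destruct (maxl_cases (map f (seq 0 n))) as [H|[x [H1 H2]]]; auto.
 apply in_map_iff in H1. destruct H1 as [j [<- Hj]]. apply in_seq in Hj.
 right; exists j; split; [lia|auto]. Qed.

Lemma maxn_scale n f c : 0 <= c -> c * maxn_ n f = maxn_ n (fun j => c * f j).
Proof. intros Hc. apply Rle_antisym.
 - destruct (maxn_cases n f) as [H|[j [Hj H]]]; rewrite H.
   rewrite Rmult_0_r; apply maxn_ge0. apply (maxn_ub n (fun j => c * f j)); auto.
 - apply maxn_lub. apply Rmult_le_pos; auto; apply maxn_ge0.
   intros j Hj. apply Rmult_le_compat_l; auto. apply maxn_ub; auto. Qed.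

Lemma maxn_scale_r n f c : 0 <= c -> maxn_ n f * c = maxn_ n (fun j => f j * c).
Proof. intros. rewrite Rmult_comm, maxn_scale; auto. apply maxn_ext; intros; ring. Qed.

Lemma maxn_exch n m F : maxn_ n (fun j => maxn_ m (fun k => F j k)) =
  maxn_ m (fun k => maxn_ n (fun j => F j k)).
Proof. apply Rle_antisym; apply maxn_lub; try apply maxn_ge0; intros; apply maxn_lub;
 try apply maxn_ge0; intros.
 - eapply Rle_trans; [|apply (maxn_ub m _ j0); auto]. simpl. apply (maxn_ub n (fun j => F j j0)); auto.
 - eapply Rle_trans; [|apply (maxn_ub n _ j0); auto]. simpl. apply (maxn_ub m (fun k => F j0 k)); auto.
Qed.

Lemma mvmul_mmul n A B x i : (i < n)%nat -> (forall k, (k < n)%nat -> 0 <= A i k) ->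
  nonneg_vec n x -> mvmul n (mmul n A B) x i = mvmul n A (mvmul n B x) i.
Proof. intros Hi HA Hx. unfold mvmul, mmul.
 transitivity (maxn_ n (fun j => maxn_ n (fun k => A i k * B k j * x j))).
 apply maxn_ext; intros; apply maxn_scale_r; auto.
 transitivity (maxn_ n (fun k => maxn_ n (fun j => A i k * (B k j * x j)))).
 rewrite maxn_exch. apply maxn_ext; intros; apply maxn_ext; intros; ring.
 apply maxn_ext; intros; symmetry; apply maxn_scale; auto. Qed.

Lemma mvmul_ext n A x y i : (forall j, (j < n)%nat -> x j = y j) -> mvmul n A x i = mvmul n A y i.
Proof. intros. unfold mvmul. apply maxn_ext. intros; rewrite H; auto. Qed.

Lemma mvmul_scale n A x c i : 0 <= c -> (forall k, (k < n)%nat -> 0 <= A i k) ->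
  mvmul n A (fun j => c * x j) i = c * mvmul n A x i.
Proof. intros. unfold mvmul. rewrite maxn_scale; auto. apply maxn_ext; intros; ring. Qed.

Lemma mpow_nonneg n A k i j : 0 <= mpow n A k i j.
Proof. destruct k; simpl. unfold mid; destruct (Nat.eqb i j); lra. apply maxn_ge0. Qed.

Lemma mvmul_nonneg n A x i : 0 <= mvmul n A x i.
Proof. apply maxn_ge0. Qed.

Definition pw (a : nat -> R) (ts : list nat) : R := fold_right Rmult 1 (map a ts).
Definition ssum (ts : list nat) : nat := fold_right Nat.add 0%nat ts.
Definition allb (n : nat) (ts : list nat) : Prop := forall t, In t ts -> (t < n)%nat.

Lemma pw_app a u v : pw a (u ++ v) = pw a u * pw a v.
Proof. unfold pw. induction u; simpl; [ring|]. rewrite IHu. ring. Qed.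
Lemma ssum_app u v : ssum (u ++ v) = (ssum u + ssum v)%nat.
Proof. induction u; simpl; auto. unfold ssum in *; simpl; rewrite IHu; lia. Qed.
Lemma pw_repeat a s m : pw a (repeat s m) = a s ^ m.
Proof. induction m; simpl; auto. unfold pw in *; simpl; rewrite IHm; ring. Qed.
Lemma ssum_repeat s m : ssum (repeat s m) = (m * s)%nat.
Proof. unfold ssum; induction m; simpl; auto. Qed.
Lemma pw_nonneg n a ts : (forall t, (t < n)%nat -> 0 <= a t) -> allb n ts -> 0 <= pw a ts.
Proof. intros Ha; induction ts; intros H; unfold pw; simpl; [lra|].
 apply Rmult_le_pos. apply Ha, H; simpl; auto. apply IHts. intros t Ht; apply H; simpl; auto. Qed.
Lemma pw_bound n a ts M : (forall t, (t < n)%nat -> 0 <= a t <= M) -> allb n ts ->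
  pw a ts <= M ^ length ts.
Proof. intros Ha; induction ts; intros H; unfold pw; simpl; [lra|].
 assert (a a0 <= M /\ 0 <= a a0) by (specialize (Ha a0 (H a0 (or_introl eq_refl))); lra).
 apply Rmult_le_compat; try lra. apply (pw_nonneg n); auto. intros; apply Ha; auto.
 intros t Ht; apply H; simpl; auto. apply IHts. intros t Ht; apply H; simpl; auto. Qed.

Lemma circ_step n (A : mat) (a : nat -> R) i t : (forall i j, (i < n)%nat -> (j < n)%nat -> A i j = a ((j + n - i) mod n)%nat) ->
  (i < n)%nat -> (t < n)%nat -> A i ((i + t) mod n)%nat = a t.
Proof. intros HA Hi Ht. assert (n <> 0%nat) by lia. rewrite HA; auto.
 2: apply Nat.mod_upper_bound; auto. f_equal.
 replace ((i + t) mod n + n - i)%nat with ((i + t) mod n + (n - i))%nat by lia.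
 rewrite Nat.Div0.add_mod_idemp_l. replace (i + t + (n - i))%nat with (t + 1 * n)%nat by lia.
 rewrite Nat.Div0.mod_add. apply Nat.mod_small; auto. Qed.

Lemma walk_lower n (A : mat) (a : nat -> R) (Hn : (0 < n)%nat)
  (Ha : forall t, (t < n)%nat -> 0 <= a t)
  (HA : forall i j, (i < n)%nat -> (j < n)%nat -> A i j = a ((j + n - i) mod n)%nat) :
  forall ts i, allb n ts -> (i < n)%nat ->
  pw a ts <= mpow n A (length ts) i ((i + ssum ts) mod n)%nat.
Proof. induction ts; intros i Hts Hi.
 - simpl. unfold pw, mid; simpl. rewrite Nat.add_0_r, Nat.mod_small, Nat.eqb_refl; auto; lra.
 - simpl. unfold mmul. set (m0 := ((i + a0) mod n)%nat).
   assert (Hm0 : (m0 < n)%nat) by (apply Nat.mod_upper_bound; lia).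
   assert (Ha0 : (a0 < n)%nat) by (apply Hts; simpl; auto).
   eapply Rle_trans; [|apply (maxn_ub n (fun k => A i k * mpow n A (length ts) k ((i + (a0 + ssum ts)) mod n)%nat) m0); auto].
   simpl. unfold m0 at 1. rewrite circ_step with (a := a); auto.
   unfold pw; simpl. apply Rmult_le_compat_l; auto.
   replace ((i + (a0 + ssum ts)) mod n)%nat with ((m0 + ssum ts) mod n)%nat.
   apply IHts; auto. intros t Ht; apply Hts; simpl; auto.
   unfold m0. rewrite Nat.Div0.add_mod_idemp_l. f_equal; lia. Qed.

Lemma walk_upper n (A : mat) (a : nat -> R) (Hn : (0 < n)%nat)
  (Ha : forall t, (t < n)%nat -> 0 <= a t)
  (HA : forall i j, (i < n)%nat -> (j < n)%nat -> A i j = a ((j + n - i) mod n)%nat) :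
  forall k i j, (i < n)%nat -> (j < n)%nat ->
  mpow n A k i j = 0 \/ exists ts, length ts = k /\ allb n ts /\ j = ((i + ssum ts) mod n)%nat /\
     mpow n A k i j <= pw a ts.
Proof. induction k; intros i j Hi Hj.
 - simpl. unfold mid. destruct (Nat.eqb_spec i j). subst. right. exists nil.
   simpl. split; auto. split. intros t []. split. rewrite Nat.add_0_r, Nat.mod_small; auto.
   unfold pw; simpl; lra. auto.
 - simpl. unfold mmul. destruct (maxn_cases n (fun k0 => A i k0 * mpow n A k k0 j)) as [H|[m0 [Hm0 H]]]; auto.
   rewrite H. destruct (IHk m0 j Hm0 Hj) as [H2|[ts [H1 [H2 [H3 H4]]]]].
   left. rewrite H2; ring.
   right. set (t := ((m0 + n - i) mod n)%nat). assert (Ht : (t < n)%nat) by (apply Nat.mod_upper_bound; lia).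
   assert (Hm : m0 = ((i + t) mod n)%nat).
   { unfold t. rewrite Nat.Div0.add_mod_idemp_r. replace (i + (m0 + n - i))%nat with (m0 + 1 * n)%nat by lia.
     rewrite Nat.Div0.mod_add, Nat.mod_small; auto. }
   exists (t :: ts). simpl. split; [lia|]. split. intros x [<-|Hx]; auto.
   split. rewrite H3, Hm, Nat.Div0.add_mod_idemp_l. f_equal; lia.
   rewrite HA by auto. fold t. unfold pw; simpl. apply Rmult_le_compat_l; auto. Qed.

Lemma pigeon : forall N (f : nat -> nat), (forall j, (j <= N)%nat -> (f j < N)%nat) ->
  exists i j, (i < j <= N)%nat /\ f i = f j.
Proof. induction N; intros f Hf.
 - specialize (Hf 0%nat (le_n 0)). lia.
 - destruct (classic (exists i, (i <= N)%nat /\ f i = f (S N))) as [[i [Hi He]]|Hn].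
   + exists i, (S N). split; [lia|auto].
   + set (c := f (S N)). assert (Hc : (c < S N)%nat) by (apply Hf; lia).
     destruct (IHN (fun j => if Nat.ltb (f j) c then f j else (f j - 1)%nat)) as [i [j [Hij He]]].
     { intros j Hj. assert (f j <> c) by (intro; apply Hn; exists j; split; auto).
       assert (f j < S N)%nat by (apply Hf; lia).
       destruct (Nat.ltb_spec (f j) c); lia. }
     exists i, j. split; [lia|].
     assert (f i <> c) by (intro; apply Hn; exists i; split; auto; lia).
     assert (f j <> c) by (intro; apply Hn; exists j; split; auto; lia).
     destruct (Nat.ltb_spec (f i) c); destruct (Nat.ltb_spec (f j) c); lia.
Qed.

Lemma firstn_add {X} (i m : nat) (l : list X) : firstn (i + m) l = firstn i l ++ firstn m (skipn i l).
Proof. revert l; induction i; intros l; simpl; auto. destruct l; simpl; auto.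
 destruct m; auto. rewrite IHi; auto. Qed.

Lemma mod_diff a b n : (n <> 0)%nat -> (a mod n = (a + b) mod n)%nat -> (b mod n = 0)%nat.
Proof. intros Hn H. rewrite Nat.Div0.add_mod in H.
 pose proof (Nat.mod_upper_bound a n Hn). pose proof (Nat.mod_upper_bound b n Hn).
 destruct (Nat.eq_dec (b mod n) 0); auto. exfalso.
 destruct (Nat.lt_ge_cases (a mod n + b mod n) n).
 rewrite (Nat.mod_small (a mod n + b mod n)) in H; lia.
 replace (a mod n + b mod n)%nat with ((a mod n + b mod n - n) + 1 * n)%nat in H by lia.
 rewrite Nat.Div0.mod_add, (Nat.mod_small (a mod n + b mod n - n)) in H; lia. Qed.

Lemma decode x1 y1 x2 y2 n : (y1 < n)%nat -> (y2 < n)%nat -> (x1 * n + y1 = x2 * n + y2)%nat ->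
  x1 = x2 /\ y1 = y2.
Proof. intros H1 H2 H. destruct (Nat.lt_total x1 x2) as [Hl|[He|Hl]].
 - assert (x1 * n + n <= x2 * n)%nat by nia. lia.
 - subst; lia.
 - assert (x2 * n + n <= x1 * n)%nat by nia. lia. Qed.

Lemma segment n (ts : list nat) : (0 < n)%nat -> (n * n <= length ts)%nat ->
  exists u v w q, ts = u ++ v ++ w /\ length v = ((q + 1) * n)%nat /\ (ssum v mod n = 0)%nat.
Proof. intros Hn Hl. assert (Hn0 : n <> 0%nat) by lia.
 destruct (pigeon (n * n) (fun j => (ssum (firstn j ts) mod n * n + j mod n)%nat)) as [i [j [Hij He]]].
 { intros j _. pose proof (Nat.mod_upper_bound (ssum (firstn j ts)) n Hn0).
   pose proof (Nat.mod_upper_bound j n Hn0). nia. }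
 pose proof (Nat.mod_upper_bound (ssum (firstn j ts)) n Hn0).
 pose proof (Nat.mod_upper_bound j n Hn0).
 pose proof (Nat.mod_upper_bound (ssum (firstn i ts)) n Hn0).
 pose proof (Nat.mod_upper_bound i n Hn0).
 assert (E1 : (i mod n = j mod n)%nat /\ (ssum (firstn i ts) mod n = ssum (firstn j ts) mod n)%nat).
 { destruct (decode _ _ _ _ n H2 H0 He); auto. }
 destruct E1 as [E1 E2].
 set (v := firstn (j - i) (skipn i ts)).
 exists (firstn i ts), v, (skipn (j - i) (skipn i ts)), ((j - i) / n - 1)%nat.
 assert (Hfj : firstn j ts = firstn i ts ++ v) by (unfold v; rewrite <- firstn_add; f_equal; lia).
 assert (Hlv : length v = (j - i)%nat) by (unfold v; rewrite length_firstn, length_skipn; lia).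
 assert (Hm : ((j - i) mod n = 0)%nat).
 { apply (mod_diff i); auto. replace (i + (j - i))%nat with j by lia. auto. }
 split. unfold v; rewrite !firstn_skipn; auto.
 split. rewrite Hlv. pose proof (Nat.div_mod_eq (j - i) n). rewrite Hm in H3.
 assert ((j - i) / n >= 1)%nat by nia. nia.
 rewrite Hfj, ssum_app in E2. apply mod_diff in E2; auto.
Qed.

Lemma argmax (a : nat -> R) n : (0 < n)%nat -> exists s, (s < n)%nat /\ forall t, (t < n)%nat -> a t <= a s.
Proof. induction n; intros Hn; [lia|]. destruct (Nat.eq_dec n 0) as [->|Hn0].
 exists 0%nat; split; [lia|]; intros t Ht; replace t with 0%nat by lia; lra.
 destruct IHn as [s [Hs H]]; [lia|]. destruct (Rle_dec (a n) (a s)).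
 exists s; split; [lia|]; intros t Ht. destruct (Nat.eq_dec t n); [subst; auto|apply H; lia].
 exists n; split; [lia|]; intros t Ht. destruct (Nat.eq_dec t n); [subst; lra|].
 specialize (H t ltac:(lia)); lra. Qed.

Lemma allb_app n u v : allb n (u ++ v) <-> allb n u /\ allb n v.
Proof. unfold allb; split; intros H. split; intros; apply H; apply in_or_app; auto.
 intros t Ht; apply in_app_or in Ht; destruct H; destruct Ht; auto. Qed.
Lemma allb_repeat n s m : (s < n)%nat -> allb n (repeat s m).
Proof. intros Hs t Ht. apply repeat_spec in Ht; subst; auto. Qed.

Lemma period n (A : mat) (a : nat -> R) s (Hn : (0 < n)%nat)
  (Ha : forall t, (t < n)%nat -> 0 <= a t)
  (HA : forall i j, (i < n)%nat -> (j < n)%nat -> A i j = a ((j + n - i) mod n)%nat)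
  (Hs : (s < n)%nat) (Hmax : forall t, (t < n)%nat -> a t <= a s) :
  forall k i j, (i < n)%nat -> (j < n)%nat -> (n * n <= k + n)%nat ->
  mpow n A (k + n) i j = a s ^ n * mpow n A k i j.
Proof. intros k i j Hi Hj Hk. assert (Hn0 : n <> 0%nat) by lia.
 assert (HM : 0 <= a s) by auto.
 assert (Hab : forall t, (t < n)%nat -> 0 <= a t <= a s) by (intros; split; auto).
 apply Rle_antisym.
 - destruct (walk_upper n A a Hn Ha HA (k + n) i j Hi Hj) as [H|[ts [H1 [H2 [H3 H4]]]]].
   rewrite H. apply Rmult_le_pos; [apply pow_le; auto|apply mpow_nonneg].
   destruct (segment n ts Hn) as [u [v [w [q [E1 [E2 E3]]]]]]; [lia|].
   subst ts. apply allb_app in H2; destruct H2 as [Hu H2]; apply allb_app in H2; destruct H2 as [Hv Hw].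
   set (ts' := u ++ repeat s (q * n) ++ w).
   assert (Hl : length ts' = k).
   { unfold ts'. rewrite !length_app, repeat_length in *. rewrite E2 in H1. nia. }
   assert (Hsum : j = ((i + ssum ts') mod n)%nat).
   { rewrite H3. unfold ts'. rewrite !ssum_app, ssum_repeat.
     apply Nat.Div0.mod_divides in E3. destruct E3 as [c Hc]. rewrite Hc.
     replace (i + (ssum u + (n * c + ssum w)))%nat with ((i + ssum u + ssum w) + c * n)%nat by lia.
     replace (i + (ssum u + (q * n * s + ssum w)))%nat with ((i + ssum u + ssum w) + (q * s) * n)%nat by nia.
     rewrite !Nat.Div0.mod_add; auto. }
   assert (Hlow : pw a ts' <= mpow n A k i j).
   { rewrite Hsum, <- Hl. apply walk_lower; auto.
     unfold ts'. apply allb_app; split; auto. apply allb_app; split; auto. apply allb_repeat; auto. }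
   eapply Rle_trans; [exact H4|]. eapply Rle_trans; [|apply Rmult_le_compat_l; [apply pow_le; auto|exact Hlow]].
   unfold ts'. rewrite !pw_app, pw_repeat.
   pose proof (pw_bound n a v (a s) Hab Hv). rewrite E2 in H.
   pose proof (pw_nonneg n a u Ha Hu). pose proof (pw_nonneg n a w Ha Hw).
   replace ((q + 1) * n)%nat with (n + q * n)%nat in H by lia. rewrite pow_add in H.
   replace (a s ^ n * (pw a u * (a s ^ (q * n) * pw a w))) with (pw a u * (a s ^ n * a s ^ (q * n)) * pw a w) by ring.
   rewrite <- Rmult_assoc. apply Rmult_le_compat_r; auto. apply Rmult_le_compat_l; auto.
 - destruct (walk_upper n A a Hn Ha HA k i j Hi Hj) as [H|[ts [H1 [H2 [H3 H4]]]]].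
   rewrite H, Rmult_0_r. apply mpow_nonneg.
   set (ts' := repeat s n ++ ts).
   assert (Hl : length ts' = (k + n)%nat) by (unfold ts'; rewrite length_app, repeat_length; lia).
   assert (Hsum : j = ((i + ssum ts') mod n)%nat).
   { rewrite H3. unfold ts'. rewrite ssum_app, ssum_repeat.
     replace (i + (n * s + ssum ts))%nat with ((i + ssum ts) + s * n)%nat by nia.
     rewrite Nat.Div0.mod_add; auto. }
   assert (Hlow : pw a ts' <= mpow n A (k + n) i j).
   { rewrite Hsum, <- Hl. apply walk_lower; auto.
     unfold ts'. apply allb_app; split; auto. apply allb_repeat; auto. }
   eapply Rle_trans; [|exact Hlow]. unfold ts'. rewrite pw_app, pw_repeat.
   apply Rmult_le_compat_l; auto. apply pow_le; auto.
Qed.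

Lemma lambda_nonneg n A : 0 <= lambda n A.
Proof. apply maxl_ge0. Qed.

Lemma ystep n A x m i : nonneg_mat n A -> nonneg_vec n x -> (i < n)%nat ->
  mvmul n (mpow n A (S m)) x i = mvmul n A (mvmul n (mpow n A m) x) i.
Proof. intros HA Hx Hi. simpl. apply mvmul_mmul; auto. Qed.

Lemma Vprop n A x t : nonneg_mat n A -> nonneg_vec n x ->
  in_V n A (lambda n A) (mvmul n (mpow n A t) x) ->
  forall m i, (i < n)%nat -> mvmul n (mpow n A (t + m)) x i = lambda n A ^ m * mvmul n (mpow n A t) x i.
Proof. intros HA Hx HV m. induction m; intros i Hi.
 rewrite Nat.add_0_r; simpl; ring.
 rewrite Nat.add_succ_r, ystep; auto.
 rewrite (mvmul_ext n A _ (fun j => lambda n A ^ m * mvmul n (mpow n A t) x j)) by auto.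
 rewrite mvmul_scale, HV; auto. simpl; ring. apply pow_le, lambda_nonneg. Qed.

Lemma maxn_zero n : maxn_ n (fun _ => 0) = 0.
Proof. apply Rle_antisym. apply maxn_lub; intros; lra. apply maxn_ge0. Qed.

Theorem proposition3 (n : nat) (A : mat) :
  nonneg_mat n A -> circulant n A ->
  forall x : vec,
    Attr n A x <->
    (nonneg_vec n x /\
     forall i, (i < n)%nat ->
       lambda n A * mvmul n (mpow n A (n * n)) x i =
       mvmul n (mpow n A (n * n + 1)) x i).
Proof.
 intros HA [a [Ha HAa]] x. split.
 - intros [Hx [t HV]]. split; auto. intros i Hi.
   assert (Hn : (0 < n)%nat) by lia.
   destruct (argmax a n Hn) as [s [Hs Hmax]].
   set (y := fun m => mvmul n (mpow n A m) x).
   assert (Hy : forall m i, (i < n)%nat -> y (S m) i = mvmul n A (y m) i).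
   { intros; unfold y; apply ystep; auto. }
   rewrite Nat.add_1_r. fold (y (S (n * n))%nat). fold (y (n * n)%nat).
   destruct (Req_dec (a s) 0) as [HM|HM].
   + assert (Hz : forall z j, (j < n)%nat -> mvmul n A z j = 0).
     { intros z j Hj. unfold mvmul. rewrite <- (maxn_zero n). apply maxn_ext. intros k Hk.
       rewrite HAa by auto. assert (Hidx : ((k + n - j) mod n < n)%nat) by (apply Nat.mod_upper_bound; lia).
       pose proof (Ha _ Hidx). pose proof (Hmax _ Hidx). replace (a ((k + n - j) mod n)%nat) with 0 by lra. ring. }
     rewrite Hy, Hz by auto. replace (n * n)%nat with (S (n * n - 1)) by nia.
     rewrite Hy, Hz by auto. ring.
   + assert (HMp : 0 < a s) by (pose proof (Ha s Hs); lra).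
     assert (Hper : forall j i, (i < n)%nat -> y (n * n + j * n)%nat i = a s ^ (j * n) * y (n * n)%nat i).
     { induction j; intros i' Hi'. simpl. rewrite Nat.add_0_r; ring.
       replace (n * n + S j * n)%nat with ((n * n + j * n) + n)%nat by lia.
       unfold y at 1. unfold mvmul at 1.
       transitivity (a s ^ n * maxn_ n (fun j0 => mpow n A (n * n + j * n) i' j0 * x j0)).
       rewrite maxn_scale by (apply pow_le; lra). apply maxn_ext; intros k Hk.
       rewrite (period n A a s Hn Ha HAa Hs Hmax); auto; [ring|lia].
       change (maxn_ n (fun j0 => mpow n A (n * n + j * n) i' j0 * x j0)) with (y (n * n + j * n)%nat i').
       rewrite IHj by auto. replace (S j * n)%nat with (n + j * n)%nat by lia.
       rewrite pow_add. ring. }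
     set (N := (n * n + t * n)%nat).
     assert (HN : (t <= N)%nat) by (unfold N; nia).
     assert (E1 : y (S N) i = lambda n A * y N i).
     { unfold y. replace (S N) with (t + S (N - t))%nat by lia. replace N with (t + (N - t))%nat at 2 by lia.
       rewrite !(Vprop n A x t); auto. simpl; ring. }
     assert (E2 : y (S N) i = a s ^ (t * n) * y (S (n * n))%nat i).
     { rewrite Hy by auto. rewrite (mvmul_ext n A _ (fun j => a s ^ (t * n) * y (n * n)%nat j)) by (intros; apply Hper; auto).
       rewrite mvmul_scale, <- Hy; auto. apply pow_le; lra. }
     assert (E3 : y N i = a s ^ (t * n) * y (n * n)%nat i) by (apply Hper; auto).
     rewrite E3, E2 in E1.
     assert (Hpos : 0 < a s ^ (t * n)) by (apply pow_lt; auto).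
     apply Rmult_eq_reg_l with (a s ^ (t * n)); [|lra]. rewrite E1; ring.
 - intros [Hx H]. split; auto. exists (n * n)%nat. intros i Hi.
   rewrite H by auto. rewrite Nat.add_1_r. symmetry. apply ystep; auto.
Qed.
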